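(* For every integer $P\ge1$ and every integer $k\ge2$, $$\sum_{i\in\{0\}\times\mathbb Z_{\ge0}^{k-1}}\exp\Bigl(-\ln(4)\sum_{j=2}^k\mathbb 1\{i_j>i_{j-1}\}\Bigl\lfloor\frac{i_j-i_{j-1}}{P}\Bigr\rfloor\Bigr)\le c\,(9P)^{k-1},\qquad c:=\mathrm e^{2+1/12}/2,$$ where $i=(i_1,\dots,i_k)$ with $i_1=0$. *)

(* Defs.v *)
From HB Require Import structures.
From mathcomp Require Import all_boot all_order all_algebra.
From mathcomp Require Import all_classical all_reals all_analysis.
Set Implicit Arguments. Unset Strict Implicit. Unset Printing Implicit Defensive.
Import Order.TTheory GRing.Theory Num.Theory.
Local Open Scope ring_scope.

(* A multi-index i = (i_1,...,i_k) is a list s of naturals of size k, with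
   i_{j+1} = nth 0 s j (0-based list indexing). *)
Definition index_set (k : nat) : set (seq nat) :=
  [set s | size s = k /\ nth 0%N s 0 = 0%N].

Definition jump_count (P : nat) (s : seq nat) : nat :=
  \sum_(1 <= j < size s)
     (if (nth 0 s j.-1 < nth 0 s j)%N then ((nth 0 s j - nth 0 s j.-1) %/ P)%N
      else 0%N).

Definition weight (R : realType) (P : nat) (s : seq nat) : R :=
  expR (- ln 4 * (jump_count P s)%:R).

Definition lemma6_c (R : realType) : R := expR (2 + 12^-1) / 2.
Arguments weight R P s : clear implicits.
Arguments lemma6_c R : clear implicits.

(* Main.v *)
Require Import Defs.
From HB Require Import structures.
From mathcomp Require Import all_boot all_order all_algebra.
From mathcomp Require Import all_classical all_reals all_analysis.
From mathcomp Require Import ring lra zify.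
From Stdlib Require Import Lia.
Import Order.TTheory GRing.Theory Num.Theory.
Local Open Scope ring_scope.

Section L.
Variable R : realType.

Definition gg (a i : nat) : R :=
  if (i <= a)%N then 2 ^+ i else 2 ^+ a.+1 * (2^-1) ^+ (i - a.+1).
Definition FF (a i : nat) : R :=
  if (i <= a)%N then 2 ^+ i else 2 ^+ a.+1 * (3 - 2 * (2^-1) ^+ (i - a.+1)).

Lemma gg_step a i : gg a i <= FF a i.+1 - FF a i.
Proof.
rewrite /gg /FF.
have [ia|ia|ia] := ltngtP i a.
- rewrite exprS; lra.
- rewrite (subSn ia) [_ ^+ (i - a.+1).+1]exprS.
  set z := (2^-1 : R) ^+ (i - a.+1); set A := (2 : R) ^+ a.+1.
  by rewrite le_eqVlt; apply/orP; left; apply/eqP; field.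
- subst. rewrite subnn expr0 exprS; lra.
Qed.

Lemma gg_sum a N : \sum_(0 <= i < N) gg a i <= 6 * 2 ^+ a.
Proof.
apply: (le_trans (y := \sum_(0 <= i < N) (FF a i.+1 - FF a i))).
  by apply: ler_sum => i _; apply: gg_step.
rewrite telescope_sumr // /FF leq0n expr0.
case: ifP => hN.
- have : (2:R) ^+ N <= 2 ^+ a.
    rewrite -(subnKC hN) exprD -{1}(mulr1 (2 ^+ N)).
    apply: ler_wpM2l; first exact: exprn_ge0.
    apply: exprn_ege1; lra.
  have : (0:R) <= 2 ^+ a by apply: exprn_ge0.
  lra.
- have h1 : (0:R) <= (2^-1) ^+ (N - a.+1) by apply: exprn_ge0; lra.
  have h2 : (0:R) <= 2 ^+ a by apply: exprn_ge0.
  rewrite exprS. nra.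
Qed.

Lemma sub_sum (T : eqType) (F L : seq T) (f : T -> R) :
  uniq F -> {subset F <= L} -> (forall x, 0 <= f x) ->
  \sum_(x <- F) f x <= \sum_(x <- L) f x.
Proof.
move=> + + f0; elim: F L => [|x F IH] L uF sub.
  by rewrite big_nil; apply: sumr_ge0.
have xL : x \in L by apply: sub; rewrite mem_head.
rewrite big_cons (big_rem x xL) /=; apply: lerD => //.
move: uF; rewrite cons_uniq => /andP[xF uF]; apply: IH => // z zF.
have zL : z \in L by apply: sub; rewrite in_cons zF orbT.
move: zL; rewrite (perm_mem (perm_to_rem xL)) in_cons => /orP[/eqP zx|//].
by move: xF; rewrite -zx zF.
Qed.

Variable P : nat.
Hypothesis hP : (0 < P)%N.

Definition q : R := 4^-1.

Lemma weightE s : weight R P s = q ^+ jump_count P s.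
Proof.
rewrite /weight mulrC expRM_natl expRN lnK // posrE; lra.
Qed.

Definition jmp (x y : nat) : nat := if (x < y)%N then ((y - x) %/ P)%N else 0%N.

Lemma jump_cons x y t : jump_count P [:: x, y & t] = (jmp x y + jump_count P (y :: t))%N.
Proof.
rewrite /jump_count /= big_nat_recl //=; congr (_ + _)%N.
apply: eq_big_nat => j /andP[j1 _].
by case: j j1.
Qed.

Lemma jump_single x : jump_count P [:: x] = 0%N.
Proof. by rewrite /jump_count /= big_geq. Qed.

Definition phi (y : nat) : R := 2 ^+ (y %/ P).

Definition Y N := [seq (i * P + j)%N | i <- iota 0 N, j <- iota 0 P].

Lemma term_bound x i j : (j < P)%N ->
  q ^+ jmp x (i * P + j) * 2 ^+ i <= gg (x %/ P) i.
Proof.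
move=> jP; rewrite /gg; set a := (x %/ P)%N.
have q0 : 0 <= q by rewrite /q; lra.
have q1 : q <= 1 by rewrite /q; lra.
case: ifP => ia.
  have h1 := exprn_ile1 (jmp x (i * P + j)) q0 q1.
  have h2 : (0:R) <= 2 ^+ i by apply: exprn_ge0.
  nra.
have ai : (a < i)%N by rewrite ltnNge ia.
have xa : (x < a.+1 * P)%N by rewrite -ltn_divLR.
have aP : (a.+1 * P <= i * P)%N by rewrite leq_mul2r ai orbT.
set e := (i - a.+1)%N.
have ePe : (e * P <= i * P + j - x)%N by rewrite /e mulnBl; lia.
have hj : jmp x (i * P + j) = (e + ((i * P + j - x) %/ P - e))%N.
  rewrite /jmp ifT; last by lia.
  by rewrite subnKC // leq_divRL.
rewrite hj exprD.
have -> : (2:R) ^+ i = 2 ^+ a.+1 * 2 ^+ e by rewrite -exprD /e subnKC.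
have h1 := exprn_ile1 ((i * P + j - x) %/ P - e) q0 q1.
have h0 : 0 <= q ^+ ((i * P + j - x) %/ P - e) by apply: exprn_ge0.
have h3 : q ^+ e * 2 ^+ e = (2^-1 : R) ^+ e by rewrite -exprMn /q; congr (_ ^+ _); field.
have h4 : (0:R) <= (2^-1) ^+ e by apply: exprn_ge0; lra.
have h5 : (0:R) <= 2 ^+ a.+1 by apply: exprn_ge0.
have h6 : 0 <= q ^+ e by apply: exprn_ge0.
have h7 : (0:R) <= 2 ^+ e by apply: exprn_ge0.
set u := q ^+ _ in h1 h0 *; set v := q ^+ e in h3 h6 *.
set w := (2:R) ^+ e in h3 h7 *; set A := (2:R) ^+ a.+1 in h5 *.
set z := (2^-1 : R) ^+ e in h3 h4 *.
have -> : v * u * (A * w) = (A * z) * u by rewrite -h3; ring.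
have hAz : 0 <= A * z by apply: mulr_ge0.
nra.
Qed.


Lemma iotaE n : iota 0 n = index_iota 0 n.
Proof. by rewrite /index_iota subn0. Qed.

Lemma step x N : \sum_(y <- Y N) q ^+ jmp x y * phi y <= 6 * P%:R * phi x.
Proof.
rewrite /Y big_allpairs_dep /=.
apply: (le_trans (y := \sum_(i <- iota 0 N) \sum_(j <- iota 0 P) gg (x %/ P) i)).
  apply: ler_sum => i _; rewrite big_seq_cond [X in _ <= X]big_seq_cond.
  apply: ler_sum => j; rewrite andbT mem_iota add0n => jP.
  rewrite /phi divnMDl // divn_small // addn0; exact: term_bound.
under eq_bigr do rewrite iotaE sumr_const_nat subn0.
rewrite iotaE.
under eq_bigr do rewrite -mulr_natr.
rewrite -mulr_suml /phi.
have := gg_sum (x %/ P) N.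
have : (0:R) <= P%:R by [].
nra.
Qed.

Fixpoint allseqs N m : seq (seq nat) :=
  if m is m'.+1 then [seq y :: t | y <- Y N, t <- allseqs N m'] else [:: [::]].

Lemma Vbound N m x :
  \sum_(t <- allseqs N m) weight R P (x :: t) <= (6 * P%:R) ^+ m * phi x.
Proof.
elim: m x => [|m IH] x /=.
  rewrite big_seq1 weightE jump_single !expr0 mul1r /phi.
  by apply: exprn_ege1; lra.
rewrite big_allpairs_dep /=.
apply: (le_trans (y := \sum_(y <- Y N) q ^+ jmp x y * ((6 * P%:R) ^+ m * phi y))).
  apply: ler_sum => y _.
  under eq_bigr do rewrite weightE jump_cons exprD -weightE.
  rewrite -mulr_sumr; apply: ler_wpM2l; first by apply: exprn_ge0; rewrite /q; lra.
  exact: IH.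
under eq_bigr do rewrite mulrCA.
rewrite -mulr_sumr exprS (mulrC (6 * P%:R)) -mulrA.
apply: ler_wpM2l; first by apply: exprn_ge0; apply: mulr_ge0 => //; lra.
exact: step.
Qed.

Lemma mem_allseqs N t : all (fun x => x < N * P)%N t -> t \in allseqs N (size t).
Proof.
elim: t => [|y t IH] //= /andP[yN tN].
apply/allpairsP; exists (y, t) => /=; split => //; last exact: IH.
apply/allpairsP; exists (y %/ P, y %% P)%N => /=; split.
- by rewrite mem_iota add0n ltn_divLR.
- by rewrite mem_iota add0n ltn_pmod.
- by rewrite -divn_eq.
Qed.

End L.

Lemma mem_sumn (s : seq nat) x : x \in s -> (x <= sumn s)%N.
Proof.
elim: s => [|y s IH] //=; rewrite in_cons => /orP[/eqP ->|/IH]; lia.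
Qed.

Lemma c_ge1 (R : realType) : 1 <= lemma6_c R.
Proof.
rewrite /lemma6_c.
have := expR_ge1Dx (2 + 12^-1 : R).
have : (0:R) <= 12^-1 by rewrite invr_ge0.
lra.
Qed.

Theorem lemma6 (R : realType) (P k : nat) :
  (1 <= P)%N -> (2 <= k)%N ->
  (\esum_(i in index_set k) (weight R P i)%:E
     <= (lemma6_c R * (9 * P%:R) ^+ (k - 1))%:E)%E.
Proof.
move=> hP hk.
apply: ge_ereal_sup => _ [X [finX XD] <-].
rewrite fsbig_finite //= sumEFin lee_fin.
set L : seq (seq nat) := finmap.enum_fset (fset_set X).
set N := (\sum_(s <- L) sumn s).+1.
have memL s : s \in L -> s = 0%N :: behead s /\ behead s \in allseqs P N (k - 1).
  move=> sL.
  have Xs : X s.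
    by move: (in_fset_set finX s) => h; rewrite -in_setE -h; exact: sL.
  have [sk s0] := XD _ Xs.
  have ss : s = 0%N :: behead s by case: s sk s0 {sL Xs} => [|y t] /= sk0 s0; [lia | rewrite s0].
  split => //.
  have -> : (k - 1)%N = size (behead s) by rewrite size_behead sk subn1.
  apply: (@mem_allseqs P hP); apply/allP => x xs.
  have xs' : x \in s by rewrite ss in_cons xs orbT.
  have h1 := mem_sumn _ _ xs'.
  have h2 : (sumn s <= \sum_(s <- L) sumn s)%N.
    by rewrite (big_rem s sL) /=; apply: leq_addr.
  have : (N <= N * P)%N by rewrite leq_pmulr.
  rewrite /N; lia.
apply: (le_trans (y := \sum_(s <- [seq 0%N :: t | t <- allseqs P N (k - 1)]) weight R P s)).
  apply: sub_sum.
  - exact: finmap.fset_uniq.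
  - move=> s sL; have [-> h] := memL s sL; exact: map_f.
  - by move=> s; rewrite /weight; apply: expR_ge0.
rewrite big_map.
apply: (le_trans (@Vbound R P hP N (k - 1) 0)).
rewrite /phi div0n expr0 mulr1.
have h9 : (6 * P%:R : R) ^+ (k - 1) <= (9 * P%:R) ^+ (k - 1).
  apply: lerXn2r; rewrite ?nnegrE; try (apply: mulr_ge0 => //; lra).
  have : (0:R) <= P%:R by [].
  lra.
have hc := c_ge1 R.
have h0 : (0:R) <= (9 * P%:R) ^+ (k - 1).
  by apply: exprn_ge0; apply: mulr_ge0 => //; lra.
nra.
Qed.
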